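(* Let $(\Omega,\mathcal F)$ be a measurable space with $\Sigma\neq\emptyset$, $\nu$ a finite measure on it, and $\mu$ a finite measure with $\mu\ll\nu$. Let $F_\mu(y)=\nu(\{\omega:\frac{d\mu}{d\nu}(\omega)\le y\})$ ($y\ge0$), $v_\mu(A)=\int_0^\infty\min(\nu(\Omega)-F_\mu(z),\nu(A))\,dz$, $I_{\mu,y}=\{\omega:\frac{d\mu}{d\nu}(\omega)>y\}$, and $\mathcal I_\mu=\{\emptyset,\Omega\}\cup\{I_{\mu,y}\mid y\ge0\}$. Assume $\mathcal I_\mu\in\Sigma$ and that the image of $F_\mu$ contains the image of $\nu$ (i.e. $\{\nu(A):A\in\mathcal F\}\subset\{F_\mu(y):y\ge0\}$). Then for every non-negative measurable $f:\Omega\to[0,\infty)$ that is comonotone with $\frac{d\mu}{d\nu}$, $$v_\mu(f)=\int_\Omega f\,d\mu=\sup\Big\{\int_\Omega f\,d\mu'\ \Big|\ \mu'\text{ a finite measure},\ \mu'\ll\nu,\ F_{\mu'}=F_\mu\Big\},$$ where $v_\mu(f)=\int_0^\infty v_\mu(\{\omega:f(\omega)>z\})\,dz$.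
   Context: $\Sigma$ denotes the set of all classes $\mathcal I\subset\mathcal F$ that are chains (totally ordered by inclusion), contain $\emptyset$ and $\Omega$, and generate $\mathcal F$ as a $\sigma$-algebra. $\frac{d\mu}{d\nu}$ is the non-negative Radon–Nikodym derivative; $F_{\mu'}$ is defined from $\mu'$ like $F_\mu$. Two functions $f,g:\Omega\to\mathbb R$ are comonotone if the family $\{\{f\le z\}: z\in\mathbb R\}\cup\{\{g\le z\}:z\in\mathbb R\}$ is a chain under inclusion. *)

(* Defs.v *)
From HB Require Import structures.
From mathcomp Require Import all_boot all_order all_algebra.
From mathcomp Require Import all_classical all_reals all_analysis.
Set Implicit Arguments. Unset Strict Implicit. Unset Printing Implicit Defensive.
Import Order.TTheory GRing.Theory Num.Theory.
Local Open Scope classical_set_scope.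
Local Open Scope ring_scope.

Definition is_chain (T : Type) (C : set (set T)) : Prop :=
  forall A B, C A -> C B -> A `<=` B \/ B `<=` A.

Definition Sigma_class d (T : measurableType d) : set (set (set T)) :=
  [set I | I `<=` measurable /\ is_chain I /\ I set0 /\ I setT /\
           <<s I >> = @measurable d T].

Definition is_density d (T : measurableType d) (R : realType)
  (mu nu : set T -> \bar R) (g : T -> R) : Prop :=
  measurable_fun setT g /\ (forall x, 0 <= g x) /\
  forall A, measurable A -> mu A = (\int[nu]_(x in A) (g x)%:E)%E.

Definition Fdist d (T : measurableType d) (R : realType)
  (nu : set T -> \bar R) (g : T -> R) (y : R) : \bar R :=
  nu [set x | g x <= y].

Definition Iset d (T : measurableType d) (R : realType) (g : T -> R) (y : R)
  : set T := [set x | y < g x].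

Definition Iclass d (T : measurableType d) (R : realType) (g : T -> R)
  : set (set T) :=
  [set A | A = set0 \/ A = setT \/ exists2 y, 0 <= y & A = Iset g y].

Definition vmu_set d (T : measurableType d) (R : realType)
  (nu : set T -> \bar R) (g : T -> R) (A : set T) : \bar R :=
  (\int[@lebesgue_measure R]_(z in [set z : R | (0 <= z)%R])
      Order.min (nu setT - Fdist nu g z) (nu A))%E.

Definition vmu_fun d (T : measurableType d) (R : realType)
  (nu : set T -> \bar R) (g : T -> R) (f : T -> R) : \bar R :=
  (\int[@lebesgue_measure R]_(z in [set z : R | (0 <= z)%R])
      vmu_set nu g [set x | (z < f x)%R])%E.

Definition comonotone (T : Type) (R : realType) (f g : T -> R) : Prop :=
  is_chain [set A | exists z : R,
                      A = [set x | f x <= z] \/ A = [set x | g x <= z]].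

(* Main.v *)
Require Import Defs.
From HB Require Import structures.
From mathcomp Require Import all_boot all_order all_algebra.
From mathcomp Require Import all_classical all_reals all_analysis.
Import Order.TTheory GRing.Theory Num.Theory.
Local Open Scope classical_set_scope.
Local Open Scope ring_scope.
Import measurable_realfun.

Section LC.
Context d (T : measurableType d) (R : realType).
Local Open Scope ereal_scope.

Lemma layer_cake (m : {finite_measure set T -> \bar R}) (h : T -> R) :
  measurable_fun setT h -> (forall x, (0 <= h x)%R) ->
  \int[m]_x (h x)%:E = \int[@lebesgue_measure R]_(t in [set t : R | (0 <= t)%R]) m [set x | (t < h x)%R] /\
  measurable_fun [set t : R | (0 <= t)%R] (fun t => m [set x | (t < h x)%R]).
Proof.
move=> mh h0.
pose A := [set p : T * R | (0 <= p.2)%R /\ (p.2 < h p.1)%R].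
have mA : measurable A.
  have -> : A = setT `&` (fun p : T * R => (0 <= p.2)%R && (p.2 < h p.1)%R) @^-1` [set true].
    by apply/seteqP; split => p /=; [case => -> -> | case => _ /andP].
  apply: measurable_and => //.
    by apply: measurable_fun_ler => //; exact: measurable_snd.
  apply: measurable_fun_ltr; first exact: measurable_snd.
  exact: measurableT_comp.
pose F := EFin \o (\1_A : T * R -> R).
have mF : measurable_fun setT F by apply/measurable_EFinP; exact: measurable_indic.
have F0 : forall p, 0 <= F p by move=> p; rewrite lee_fin /= indicE; case: (_ \in _).
have mS t : measurable [set x | (t < h x)%R].
  rewrite (_ : [set x | (t < h x)%R] = setT `&` h @^-1` `]t, +oo[%classic).
    exact: mh.
  apply/seteqP; split => x /=.
    by rewrite in_itv/= andbT.
  by rewrite in_itv/= andbT => -[].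
have G_eq t : fubini_G m F t = if (0 <= t)%R then m [set x | (t < h x)%R] else 0.
  rewrite /fubini_G; case: ifPn => t0.
    transitivity (\int[m]_x (\1_[set x | (t < h x)%R] x)%:E); last first.
      by rewrite integral_indic// setIT.
    apply: eq_integral => x _.
    rewrite /F /= !indicE (_ : ((x, t) \in A) = (x \in [set x0 | (t < h x0)%R]))//.
    by apply/idP/idP; rewrite !inE /A /=; [case | move=> ?; split].
  rewrite -(integral0 m setT); apply: eq_integral => x _.
  rewrite /F /= indicE memNset //= /A /=.
  by case=> /[swap] _; apply/negP.
split; last first.
  apply: (eq_measurable_fun (fubini_G m F)).
    by move=> t; rewrite inE /= => t0; rewrite G_eq t0.
  apply: measurable_funS (indic_measurable_fun_fubini_tonelli_G m mA) => //.
transitivity (\int[m]_x \int[@lebesgue_measure R]_t F (x, t)).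
  apply: eq_integral => x _.
  transitivity (\int[@lebesgue_measure R]_t (\1_(`[0%R, h x[%classic) t)%:E).
    rewrite integral_indic// setIT; have := lebesgue_measure_itv `[0%R, h x[; rewrite /= => ->; rewrite lte_fin.
    have [hx|] := ltP 0%R (h x); first by rewrite oppr0 adde0.
    by rewrite le_eqVlt ltNge h0 orbF => /eqP ->.
  apply: eq_integral => t _; rewrite /F /= !indicE (_ : ((x, t) \in A) = (t \in `[0%R, h x[%classic))//.
  by apply/idP/idP; rewrite !inE /A /= in_itv /=; [case=> -> -> | move/andP].
rewrite fubini_tonelli//.
rewrite [RHS]integral_mkcond; apply: eq_integral => t _.
rewrite patchE -/(fubini_G m F t) G_eq.
have -> : (t \in [set t0 : R | (0 <= t0)%R]) = (0 <= t)%R by apply/idP/idP; rewrite inE.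
by case: ifP.
Qed.
End LC.

Section Helpers.
Context d (T : measurableType d) (R : realType).
Local Open Scope ereal_scope.

Lemma mlt (h : T -> R) t : measurable_fun setT h -> measurable [set x | (t < h x)%R].
Proof.
move=> mh; rewrite (_ : [set x | (t < h x)%R] = setT `&` h @^-1` `]t, +oo[%classic).
  exact: mh.
apply/seteqP; split => x /=.
  by rewrite in_itv/= andbT.
by rewrite in_itv/= andbT => -[].
Qed.

Lemma mle (h : T -> R) t : measurable_fun setT h -> measurable [set x | (h x <= t)%R].
Proof.
move=> mh; rewrite (_ : [set x | (h x <= t)%R] = setT `&` h @^-1` `]-oo, t]%classic).
  exact: mh.
apply/seteqP; split => x /=.
  by rewrite in_itv/=.
by rewrite in_itv/= => -[].
Qed.

Lemma nu_gt (nu : {finite_measure set T -> \bar R}) (h : T -> R) t :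
  measurable_fun setT h ->
  nu [set x | (t < h x)%R] = nu setT - nu [set x | (h x <= t)%R].
Proof.
move=> mh; rewrite (_ : [set x | (t < h x)%R] = setT `\` [set x | (h x <= t)%R]).
  rewrite measureD ?setTI//; first exact: mle.
  by rewrite ltey_eq fin_num_measure.
apply/seteqP; split => x /=.
  by move=> tx; split => //; apply/negP; rewrite -ltNge.
by case=> _ /negP; rewrite -ltNge.
Qed.

Lemma dens_int (nu : {finite_measure set T -> \bar R}) (h : T -> R) (A : set T) :
  measurable_fun setT h -> (forall x, (0 <= h x)%R) -> measurable A ->
  \int[nu]_(x in A) (h x)%:E =
    \int[@lebesgue_measure R]_(t in [set t : R | (0 <= t)%R]) nu (A `&` [set x | (t < h x)%R]) /\
  measurable_fun [set t : R | (0 <= t)%R] (fun t => nu (A `&` [set x | (t < h x)%R])).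
Proof.
move=> mh h0 mA.
pose k := fun x => (h x * \1_A x)%R.
have mk : measurable_fun setT k.
  apply: measurable_funM => //; exact: measurable_indic.
have k0 x : (0 <= k x)%R by rewrite /k indicE mulr_ge0.
have [E1 E2] := @layer_cake _ _ _ nu k mk k0.
have eqS t : (0 <= t)%R -> [set x | (t < k x)%R] = A `&` [set x | (t < h x)%R].
  move=> t0; apply/seteqP; split => x /=; rewrite /k indicE.
    case: (boolP (x \in A)) => xA; rewrite ?mulr1 ?mulr0.
      by move=> tx; split => //; rewrite -inE.
    by move=> /(le_lt_trans t0); rewrite ltxx.
  by case=> xA; rewrite mem_set// mulr1.
split.
  transitivity (\int[nu]_x (k x)%:E).
    rewrite integral_mkcond; apply: eq_integral => x _.
    rewrite patchE /k indicE; case: ifPn => xA; first by rewrite mulr1.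
    by rewrite mulr0.
  rewrite E1; apply: eq_integral => t; rewrite inE => t0.
  by rewrite eqS.
apply: eq_measurable_fun E2 => t; rewrite inE => t0; by rewrite eqS.
Qed.

Lemma min_fact (nu : {finite_measure set T -> \bar R}) (g : T -> R) (A : set T) t :
  measurable_fun setT g -> measurable A ->
  (A `<=` [set x | (t < g x)%R] \/ [set x | (t < g x)%R] `<=` A) ->
  nu (A `&` [set x | (t < g x)%R]) = Order.min (nu setT - Fdist nu g t) (nu A).
Proof.
move=> mg mA hc; rewrite /Fdist -nu_gt//.
case: hc => H.
  rewrite setIidl// min_r//; apply: le_measure => //; rewrite inE//; exact: mlt.
rewrite setIidr// min_l//; apply: le_measure => //; rewrite inE//; exact: mlt.
Qed.

Lemma le_fact (nu : {finite_measure set T -> \bar R}) (g g' : T -> R) (A : set T) t :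
  measurable_fun setT g -> measurable_fun setT g' -> measurable A ->
  (A `<=` [set x | (t < g x)%R] \/ [set x | (t < g x)%R] `<=` A) ->
  Fdist nu g' t = Fdist nu g t ->
  nu (A `&` [set x | (t < g' x)%R]) <= nu (A `&` [set x | (t < g x)%R]).
Proof.
move=> mg mg' mA hc hF; rewrite (min_fact nu g A t mg mA hc) -hF le_min.
rewrite /Fdist -nu_gt// measureIl ?measureIr//; exact: mlt.
Qed.

Lemma vmu_eq (nu : {finite_measure set T -> \bar R}) (g : T -> R) (A : set T) :
  measurable_fun setT g -> (forall x, (0 <= g x)%R) -> measurable A ->
  (forall t, (0 <= t)%R -> A `<=` [set x | (t < g x)%R] \/ [set x | (t < g x)%R] `<=` A) ->
  \int[nu]_(x in A) (g x)%:E = vmu_set nu g A.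
Proof.
move=> mg g0 mA hc; have [-> _] := dens_int nu g A mg g0 mA.
rewrite /vmu_set; apply: eq_integral => t; rewrite inE => t0.
by apply: min_fact => //; exact: hc.
Qed.

Lemma le_dens (nu : {finite_measure set T -> \bar R}) (g g' : T -> R) (A : set T) :
  measurable_fun setT g -> (forall x, (0 <= g x)%R) ->
  measurable_fun setT g' -> (forall x, (0 <= g' x)%R) -> measurable A ->
  (forall t, (0 <= t)%R -> A `<=` [set x | (t < g x)%R] \/ [set x | (t < g x)%R] `<=` A) ->
  (forall t, (0 <= t)%R -> Fdist nu g' t = Fdist nu g t) ->
  \int[nu]_(x in A) (g' x)%:E <= \int[nu]_(x in A) (g x)%:E.
Proof.
move=> mg g0 mg' g'0 mA hc hF.
have [-> m1] := dens_int nu g' A mg' g'0 mA.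
have [-> m2] := dens_int nu g A mg g0 mA.
apply: ge0_le_integral => //.
- rewrite (_ : [set t : R | (0 <= t)%R] = `[0%R, +oo[%classic); first exact: measurable_itv.
  by apply/seteqP; split => t /=; rewrite in_itv/= andbT.
- by move=> t t0; apply: le_fact => //; [exact: hc | exact: hF].
Qed.

End Helpers.

Theorem theorem14 (d : measure_display) (T : measurableType d) (R : realType)
  (nu : {finite_measure set T -> \bar R})
  (mu : {finite_measure set T -> \bar R})
  (g : T -> R) :
  @Sigma_class d T !=set0 ->
  mu `<< nu ->
  is_density mu nu g ->
  @Sigma_class d T (Iclass g) ->
  (forall A, measurable A -> exists2 y : R, 0 <= y & nu A = Fdist nu g y) ->
  forall f : T -> R, measurable_fun setT f -> (forall x, 0 <= f x) ->
  comonotone f g ->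
  vmu_fun nu g f = (\int[mu]_x (f x)%:E)%E /\
  (\int[mu]_x (f x)%:E)%E =
    ereal_sup [set (\int[mu']_x (f x)%:E)%E |
               mu' in [set mu' : {finite_measure set T -> \bar R} |
                       mu' `<< nu /\
                       exists g' : T -> R, is_density mu' nu g' /\
                         forall y : R, 0 <= y -> Fdist nu g' y = Fdist nu g y]].
Proof.
move=> _ munu [mg [g0 hmu]] _ _ f mf f0 hcom.
have comp z t : [set x | z < f x] `<=` [set x | t < g x] \/
                [set x | t < g x] `<=` [set x | z < f x].
  have := hcom [set x | f x <= z] [set x | g x <= t]
    (ex_intro _ z (or_introl erefl)) (ex_intro _ t (or_intror erefl)).
  case=> H; [right|left] => x /=.
    by move=> tx; rewrite ltNge; apply/negP => /H /=; rewrite leNgt tx.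
  by move=> zx; rewrite ltNge; apply/negP => /H /=; rewrite leNgt zx.
have mA z : measurable [set x | z < f x] by exact: mlt.
have [E1 E2] := @layer_cake _ _ _ mu f mf f0.
split.
  rewrite E1 /vmu_fun; apply: eq_integral => z _.
  rewrite hmu// vmu_eq//; move=> t _; exact: comp.
apply/eqP; rewrite eq_le; apply/andP; split.
  apply: ereal_sup_ubound; exists mu => //; split => //.
  by exists g; split => //.
apply: ub_ereal_sup => _ [mu' [mu'nu [g' [[mg' [g'0 hmu']] hF]]] <-].
have [E1' E2'] := @layer_cake _ _ _ mu' f mf f0.
rewrite E1 E1'; apply: ge0_le_integral => //.
- have -> : [set t : R | (0 <= t)%R] = `[0%R, +oo[%classic.
    by apply/seteqP; split => t /=; rewrite in_itv/= andbT.
  exact: measurable_itv.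
move=> z _; rewrite hmu// hmu'//; apply: le_dens => //.
Qed.
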